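(* Let $k,s$ be integers with $k\geq 3$ and $s\geq 3$. Then: (1) If $3\leq k\leq \binom{s-1}{\lceil (s-1)/2\rceil}+1$, then $\mathrm{GR}_{k}(\mathcal{C}_3:\mathcal{C}_s)=s$. (2) If $k>\binom{s-1}{\lceil (s-1)/2\rceil}+1$, then the pair $(\mathcal{C}_3,\mathcal{C}_s)$ is $(\mathcal{C}_3:\mathcal{C}_s)_k$-good.
   Context: $\mathcal{B}_N$ denotes the Boolean lattice of all subsets of $[N]=\{1,\dots,N\}$ ordered by inclusion. For posets $\mathcal{P},\mathcal{Q}$, an induced copy of $\mathcal{P}$ in $\mathcal{Q}$ is the image of an injection $f:\mathcal{P}\to\mathcal{Q}$ with $f(X)\le f(Y)$ iff $X\le Y$. $\mathcal{C}_t$ is the $t$-element chain. A coloring of $\mathcal{B}_N$ is an assignment of colors to its sets; a $k$-coloring is exact if it uses colors from $[k]$ and every color in $[k]$ is used at least once. A colored subfamily is monochromatic if all its sets have the same color and rainbow if all its sets have pairwise distinct colors. The pair $(\mathcal{Q},\mathcal{P})$ is $(\mathcal{Q}:\mathcal{P})_k$-good if for every positive integer $N$, every exact $k$-coloring of $\mathcal{B}_N$ contains a rainbow induced copy of $\mathcal{Q}$ or a monochromatic induced copy of $\mathcal{P}$. For a pair that is not $(\mathcal{Q}:\mathcal{P})_k$-good, the Boolean Gallai–Ramsey number $\mathrm{GR}_k(\mathcal{Q}:\mathcal{P})$ is the smallest integer $n$ such that for every $N\ge n$, every exact $k$-coloring of $\mathcal{B}_N$ contains a rainbow induced copy of $\mathcal{Q}$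 or a monochromatic induced copy of $\mathcal{P}$. *)

(* Defs.v *)
From mathcomp Require Import all_boot.
Set Implicit Arguments. Unset Strict Implicit. Unset Printing Implicit Defensive.

(* Boolean lattice B_N = {set 'I_N} ordered by \subset.
   Chain C_t = 'I_t ordered by <=. *)

Definition induced_chain (N t : nat) (f : 'I_t -> {set 'I_N}) : Prop :=
  injective f /\ forall i j : 'I_t, (f i \subset f j) = (i <= j).

Definition exact_coloring (N k : nat) (c : {set 'I_N} -> nat) : Prop :=
  (forall A, 1 <= c A <= k) /\
  (forall i, 1 <= i <= k -> exists A, c A = i).

Definition has_rainbow_chain (N t : nat) (c : {set 'I_N} -> nat) : Prop :=
  exists f : 'I_t -> {set 'I_N},
    @induced_chain N t f /\ forall i j : 'I_t, c (f i) = c (f j) -> i = j.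

Definition has_mono_chain (N t : nat) (c : {set 'I_N} -> nat) : Prop :=
  exists f : 'I_t -> {set 'I_N},
    @induced_chain N t f /\ forall i j : 'I_t, c (f i) = c (f j).

Definition GR_prop (k q p N : nat) : Prop :=
  forall c : {set 'I_N} -> nat, @exact_coloring N k c ->
    @has_rainbow_chain N q c \/ @has_mono_chain N p c.

Definition GR_good (k q p : nat) : Prop := forall N, 0 < N -> GR_prop k q p N.

Definition GR_is (k q p n : nat) : Prop :=
  ~ GR_good k q p /\
  (forall N, n <= N -> GR_prop k q p N) /\
  (forall m, (forall N, m <= N -> GR_prop k q p N) -> n <= m).

(* Main.v *)
Require Import Defs.
From mathcomp Require Import all_boot.
From mathcomp Require Import zify.
From mathcomp Require Import all_boot.
From Stdlib Require Import Classical_Prop.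
Set Implicit Arguments. Unset Strict Implicit. Unset Printing Implicit Defensive.

Section Chains.
Variable T : finType.
Local Notation sub := (fun A B : {set T} => A \subset B).

Lemma path_between (Ms : seq {set T}) : forall U, path sub U Ms ->
  forall M, M \in Ms -> U \subset M /\ M \subset last U Ms.
Proof.
elim: Ms => [|M0 rest IH] U //= /andP[hU hp] M.
rewrite inE => /orP[/eqP->|hM].
  split=> //. case: rest hp IH => [|M1 r] //= hp IH.
  have [h1 h2] := IH M0 hp M1 (mem_head _ _); exact: subset_trans h1 h2.
have [h1 h2] := IH M0 hp M hM; split=> //; exact: subset_trans hU h1.
Qed.

Lemma path_last (Ms : seq {set T}) U : path sub U Ms -> U \subset last U Ms.
Proof.
elim: Ms U => [|M0 r IH] U //= /andP[h1 h2]; exact: subset_trans h1 (IH _ h2).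
Qed.

Lemma chain_path (n : nat) : forall (U V : {set T}) (Ms : seq {set T}),
  U \subset V -> #|V :\: U| = n ->
  path sub U Ms -> last U Ms \subset V ->
  exists C : nat -> {set T}, [/\ C 0 = U, (forall i, C i \subset C i.+1),
     (forall i, #|C i| = #|U| + minn i n) &
     (forall M, M \in Ms -> C (#|M| - #|U|) = M)].
Proof.
elim: n => [|n IHn] U V Ms hUV hn hp hl.
  have eUV : U = V.
    apply/eqP; rewrite eqEsubset hUV /=.
    by rewrite -setD_eq0 -cards_eq0 hn.
  exists (fun _ => U); split=> // [i|M hM]; first by rewrite minn0 addn0.
  have [h1 h2] := path_between hp hM.
  apply/eqP; rewrite eqEsubset h1 /=; rewrite eUV; exact: subset_trans h2 hl.
elim: Ms hp hl => [|M0 rest IHMs] hp hl.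
  have : 0 < #|V :\: U| by rewrite hn.
  move/card_gt0P => [x]; rewrite inE => /andP[hxU hxV].
  have hU' : x |: U \subset V by rewrite subUset sub1set hxV hUV.
  have hn' : #|V :\: (x |: U)| = n.
    move: hn; rewrite !cardsD (setIidPr hU') (setIidPr hUV) cardsU1 hxU.
    move=> h; have := subset_leq_card hUV; clear -h; lia.
  have [C' [h0 hs hc _]] := IHn (x |: U) V [::] hU' hn' isT hU'.
  exists (fun i => if i is j.+1 then C' j else U); split=> //.
  - by case=> [|i] //; rewrite h0 subsetUr.
  - case=> [|i]; first by rewrite min0n addn0.
    by rewrite hc cardsU1 hxU minnSS; clear; lia.
move: hp => /= /andP[hUM0 hp].
have [eM0|nM0] := eqVneq M0 U.
  subst M0.
  have [C [h0 hs hc hM]] := IHMs hp hl.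
  exists C; split=> // M; rewrite inE => /orP[/eqP->|]; last exact: hM.
  by rewrite subnn h0.
have : U \proper M0 by rewrite properEneq eq_sym nM0.
move/properP => [_ [x hxM0 hxU]].
have hlast : M0 \subset V.
  by apply: subset_trans hl; apply: path_last.
have hxV : x \in V by apply: (subsetP hlast).
have hU' : x |: U \subset V by rewrite subUset sub1set hxV hUV.
have hn' : #|V :\: (x |: U)| = n.
  move: hn; rewrite !cardsD (setIidPr hU') (setIidPr hUV) cardsU1 hxU.
  move=> h; have := subset_leq_card hUV; clear -h; lia.
have hp' : path sub (x |: U) (M0 :: rest).
  by rewrite /= hp andbT subUset sub1set hxM0.
have [C' [h0 hs hc hM]] := IHn (x |: U) V (M0 :: rest) hU' hn' hp' hl.
exists (fun i => if i is j.+1 then C' j else U); split=> //.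
- by case=> [|i] //; rewrite h0 subsetUr.
- case=> [|i]; first by rewrite min0n addn0.
  by rewrite hc cardsU1 hxU minnSS; clear; lia.
- move=> M hMin.
  have [h1 _] := path_between hp' hMin.
  have hlt : #|U| < #|M|.
    apply: leq_trans (subset_leq_card h1); by rewrite cardsU1 hxU.
  have -> : #|M| - #|U| = (#|M| - #|x |: U|).+1 by rewrite cardsU1 hxU; clear -hlt; lia.
  exact: hM.
Qed.

Lemma chain3 (Z X W : {set T}) : Z \subset X -> X \subset W ->
  exists C : nat -> {set T}, [/\ (forall i j, i <= j -> C i \subset C j),
     (forall i, #|C i| = minn i #|T|), C #|Z| = Z, C #|X| = X & C #|W| = W].
Proof.
move=> hZX hXW.
have hp : path sub set0 [:: Z; X; W] by rewrite /= sub0set hZX hXW.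
have [C [h0 hs hc hM]] := chain_path (sub0set setT) (erefl _) hp (subsetT _).
exists C; split.
- move=> i j /subnK <-; elim: (j - i) => [|d IH]; first by rewrite add0n.
  by rewrite addSn; apply: subset_trans IH (hs _).
- by move=> i; rewrite hc cards0 setD0 cardsT.
- by have := hM Z; rewrite cards0 subn0; apply; rewrite !inE eqxx.
- by have := hM X; rewrite cards0 subn0; apply; rewrite !inE eqxx ?orbT.
- by have := hM W; rewrite cards0 subn0; apply; rewrite !inE eqxx ?orbT.
Qed.
End Chains.

Lemma LYM (T : finType) (n : nat) : forall (D : {set T}) (F : {set {set T}}),
  #|D| = n -> (forall A, A \in F -> A \subset D) ->
  (forall A B, A \in F -> B \in F -> A \subset B -> A = B) ->
  \sum_(A in F) #|A|`! * (n - #|A|)`! <= n`!.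
Proof.
elim: n => [|n IHn] D F hD hsub hanti.
  have [hDF|hDF] := boolP (D \in F).
    have -> : F = [set D].
      apply/setP => A; rewrite inE; apply/idP/eqP => [hA|->//].
      exact: hanti hA hDF (hsub _ hA).
    by rewrite big_set1 hD.
  rewrite big_pred0 // => A; apply/negbTE/negP => hA.
  have : A = D.
    apply/eqP; rewrite eqEcard hsub // hD; done.
  by move=> eAD; rewrite -eAD hA in hDF.
have [hDF|hDF] := boolP (D \in F).
  have -> : F = [set D].
    apply/setP => A; rewrite inE; apply/idP/eqP => [hA|->//].
    exact: hanti hA hDF (hsub _ hA).
  by rewrite big_set1 hD subnn muln1.
have hprop : forall A, A \in F -> #|A| <= n.
  move=> A hA; have : A \proper D.
    by rewrite properEneq hsub // andbT; apply: contraNneq hDF => <-.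
  by move/proper_card; rewrite hD.
pose g (A : {set T}) := #|A|`! * (n - #|A|)`!.
have E : forall A, A \in F -> #|A|`! * (n.+1 - #|A|)`! = \sum_(e in D) (e \notin A) * g A.
  move=> A hA.
  have -> : \sum_(e in D) (e \notin A) * g A = \sum_(e in D :\: A) g A.
    rewrite [RHS]big_mkcond [LHS]big_mkcond; apply: eq_bigr => e _.
    by rewrite !inE; case: (e \in D); case: (e \in A); rewrite /= ?mul0n ?mul1n.
  rewrite sum_nat_const cardsD (setIidPr (hsub _ hA)) hD /g subSn ?hprop // factS.
  by rewrite mulnCA.
rewrite (eq_bigr _ E) exchange_big /=.
apply: (@leq_trans (\sum_(e in D) n`!)); last by rewrite sum_nat_const hD.
apply: leq_sum => e he.
have -> : \sum_(A in F) (e \notin A) * g A = \sum_(A in [set A in F | e \notin A]) g A.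
  rewrite [RHS]big_mkcond [LHS]big_mkcond; apply: eq_bigr => A _.
  by rewrite !inE; case: (A \in F); case: (e \in A); rewrite /= ?mul0n ?mul1n.
apply: (IHn (D :\ e)).
- by move: hD; rewrite (cardsD1 e) he add1n => -[].
- move=> A; rewrite inE => /andP[hA heA]; rewrite subsetD1 heA hsub //.
- move=> A B; rewrite !inE => /andP[hA _] /andP[hB _]; exact: hanti.
Qed.

Lemma bin_max n a : 'C(n, a) <= 'C(n, n./2).
Proof.
have hn := odd_double_half n; rewrite -mul2n in hn.
have step : forall b, b.+1 <= n./2 -> 'C(n, b) <= 'C(n, b.+1).
  move=> b hb; have e := mul_bin_left n b.
  rewrite -(@leq_pmul2l b.+1) // e leq_mul2r; apply/orP; right.
  clear -hb hn; lia.
have low : forall d b, b + d = n./2 -> 'C(n, b) <= 'C(n, n./2).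
  elim=> [|d IH] b hb; first by rewrite -hb addn0.
  apply: leq_trans (IH b.+1 _); last by rewrite addSnnS.
  apply: step; rewrite -hb; clear; lia.
have [ha|ha] := leqP a n./2.
  by apply: (low (n./2 - a)); clear -ha; lia.
have [han|han] := leqP a n; last by rewrite bin_small.
rewrite -bin_sub //; apply: (low (n./2 - (n - a))); clear -ha han hn; lia.
Qed.

Lemma sperner (T : finType) (F : {set {set T}}) :
  (forall A B, A \in F -> B \in F -> A \subset B -> A = B) ->
  #|F| <= 'C(#|T|, #|T|./2).
Proof.
move=> hanti.
set n := #|T|; set h := n./2.
have hh : h <= n by rewrite /h -divn2 leq_div.
have fmin : forall a, a <= n -> h`! * (n - h)`! <= a`! * (n - a)`!.
  move=> a ha.
  have hp : 0 < 'C(n, a) by rewrite bin_gt0.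
  rewrite -(leq_pmul2l hp); apply: (@leq_trans ('C(n, h) * (h`! * (n - h)`!))).
    by rewrite leq_mul2r bin_max orbT.
  by rewrite bin_fact // bin_fact.
have hf : 0 < h`! * (n - h)`! by rewrite muln_gt0 !fact_gt0.
rewrite -(leq_pmul2r hf) bin_fact //.
apply: (@leq_trans (\sum_(A in F) #|A|`! * (n - #|A|)`!)).
  rewrite -sum_nat_const; apply: leq_sum => A _; apply: fmin; exact: max_card.
apply: (@LYM T n setT) => //; by rewrite cardsT.
Qed.

Section Main.
Variable N : nat.
Variable c : {set 'I_N} -> nat.

Lemma rb3 (A B D : {set 'I_N}) : A \proper B -> B \proper D ->
  c A != c B -> c B != c D -> c A != c D -> @has_rainbow_chain N 3 c.
Proof.
move=> hAB hBD n1 n2 n3.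
have hAD : A \proper D := proper_trans hAB hBD.
move: hAB hBD hAD; rewrite !properE => /andP[s1 t1] /andP[s2 t2] /andP[s3 t3].
pose f := fun i : 'I_3 => if val i == 0 then A else if val i == 1 then B else D.
have key : forall i j : 'I_3, (f i \subset f j) = (i <= j).
  move=> [[|[|[|i]]] hi] [[|[|[|j]]] hj] //=; rewrite /f /= ?subxx //;
  by apply/negbTE.
exists f; split; first split=> //.
- move=> i j e; apply/val_inj/eqP; rewrite eqn_leq -!key e !subxx //.
- move=> [[|[|[|i]]] hi] [[|[|[|j]]] hj] //= e; apply/val_inj => //=;
  move: e; rewrite /f /= => e; move: n1 n2 n3; rewrite ?e ?eqxx //.
Qed.

Hypothesis norb : ~ @has_rainbow_chain N 3 c.

Lemma F1 (A B : {set 'I_N}) : A \proper B -> c A != c set0 -> c B != c set0 -> c A = c B.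
Proof.
move=> hAB hA hB; apply/eqP/negPn/negP => hne; apply: norb.
have h0 : set0 \proper A by rewrite proper0; apply: contraNneq hA => ->.
by apply: (rb3 h0 hAB) => //; rewrite eq_sym.
Qed.

Lemma sd_lt (X Y D : {set 'I_N}) : X :&: Y \subset D -> D \subset X :|: Y -> D != X ->
  #|(D :\: Y) :|: (Y :\: D)| < #|(X :\: Y) :|: (Y :\: X)|.
Proof.
move=> hZ hW hDX; apply: proper_card; rewrite properE; apply/andP; split.
  apply/subsetP => x; have := subsetP hZ x; have := subsetP hW x; rewrite !inE.
  by case: (x \in X); case: (x \in Y); case: (x \in D).
move: hDX; rewrite eqEsubset negb_and => /orP[] /subsetPn [x h1 h2];
apply/subsetPn; exists x; move: h1 h2;
have := subsetP hZ x; have := subsetP hW x; rewrite !inE;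
by case: (x \in X); case: (x \in Y); case: (x \in D).
Qed.

Lemma mono_exists s k : s <= N -> 3 <= k -> @exact_coloring N k c -> @has_mono_chain N s c.
Proof.
move=> hsN hk [hrange hsurj].
set a := c set0.
have [A1 e1] := hsurj 1 ltac:(clear -hk; lia).
have [A2 e2] := hsurj 2 ltac:(clear -hk; lia).
have [A3 e3] := hsurj 3 ltac:(clear -hk; lia).
have two : exists X Y, [&& c X != a, c Y != a & c X != c Y].
  have [ha|ha] := eqVneq a 1.
    by exists A2, A3; rewrite e2 e3 ha.
  have [hb|hb] := eqVneq a 2.
    by exists A1, A3; rewrite e1 e3 hb.
  by exists A1, A2; rewrite e1 e2 eq_sym ha eq_sym hb.
pose P := fun p : {set 'I_N} * {set 'I_N} => [&& c p.1 != a, c p.2 != a & c p.1 != c p.2].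
pose sd := fun p : {set 'I_N} * {set 'I_N} => #|(p.1 :\: p.2) :|: (p.2 :\: p.1)|.
have exn : exists n, [exists p, P p && (sd p == n)].
  move: two => [X [Y h]]; exists (sd (X, Y)); apply/existsP; exists (X, Y).
  by rewrite eqxx andbT.
case: (ex_minnP exn) => m /existsP [[X Y] /andP [hP /eqP hm]] hmin.
move: hP; rewrite /P /= => /and3P [hX hY hXY].
have nXY : ~~ (X \subset Y).
  apply/negP => hs.
  have : X \proper Y by rewrite properEneq hs andbT; apply: contraNneq hXY => ->.
  by move/F1 => /(_ hX hY) e; rewrite e eqxx in hXY.
have nYX : ~~ (Y \subset X).
  apply/negP => hs.
  have : Y \proper X by rewrite properEneq hs andbT; apply: contraNneq hXY => ->.
  by move/F1 => /(_ hY hX) e; rewrite e eqxx in hXY.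
have [C [hmono hcard hCZ hCX hCW]] := chain3 (subsetIl X Y) (subsetUl X Y).
rewrite card_ord in hcard.
have comp : forall i j, C i \subset C j \/ C j \subset C i.
  by move=> i j; case: (leqP i j) => h; [left|right]; apply: hmono => //; apply: ltnW.
have alpha : forall j, j <= N -> j != #|X| -> c (C j) = a.
  move=> j hj hjX; apply/eqP/negPn/negP => hc.
  have hCj : C j != X.
    apply: contraNneq hjX => e; have := hcard j; rewrite e => ->.
    by rewrite (minn_idPl hj).
  have [hZj|hZj] := boolP (X :&: Y \subset C j); last first.
    have hjZ : C j \subset X :&: Y.
      by case: (comp j #|X :&: Y|); rewrite hCZ // => h; rewrite h in hZj.
    have p1 : C j \proper X.
      rewrite properEneq hCj; apply: subset_trans hjZ (subsetIl _ _).
    have p2 : C j \proper Y.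
      rewrite properEneq (subset_trans hjZ (subsetIr _ _)) andbT.
      apply: contraNneq nYX => e; rewrite -e; apply: subset_trans hjZ (subsetIl _ _).
    have q1 := F1 p1 hc hX; have q2 := F1 p2 hc hY.
    by rewrite -q1 q2 eqxx in hXY.
  have [hjW|hjW] := boolP (C j \subset X :|: Y); last first.
    have hWj : X :|: Y \subset C j.
      by case: (comp j #|X :|: Y|); rewrite hCW // => h; rewrite h in hjW.
    have p1 : X \proper C j.
      rewrite properEneq eq_sym hCj; apply: subset_trans (subsetUl _ _) hWj.
    have p2 : Y \proper C j.
      rewrite properEneq (subset_trans (subsetUr _ _) hWj) andbT.
      apply: contraNneq nXY => ->; apply: subset_trans (subsetUl _ _) hWj.
    have q1 := F1 p1 hX hc; have q2 := F1 p2 hY hc.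
    by rewrite q1 -q2 eqxx in hXY.
  have [eY|nY] := eqVneq (c (C j)) (c Y).
    case: (comp j #|X|); rewrite hCX => h.
      have : C j \proper X by rewrite properEneq hCj h.
      by move/F1 => /(_ hc hX) e; rewrite -e eY eqxx in hXY.
    have : X \proper C j by rewrite properEneq eq_sym hCj h.
    by move/F1 => /(_ hX hc) e; rewrite e eY eqxx in hXY.
  have := hmin (sd (C j, Y)).
  have -> : [exists p, P p && (sd p == sd (C j, Y))].
    by apply/existsP; exists (C j, Y); rewrite /P /= hc hY nY eqxx.
  move=> /(_ isT); rewrite -hm /sd /= leqNgt => /negP; apply.
  exact: sd_lt.
pose h := fun i : nat => if i < #|X| then i else i.+1.
have hle : forall i j, (h i <= h j) = (i <= j).
  move=> i j; rewrite /h; case: (ltnP i #|X|); case: (ltnP j #|X|) => h1 h2;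
  apply/idP/idP => h3; clear -h1 h2 h3; lia.
have hhN : forall i : 'I_s, h i <= N.
  move=> [i hi] /=; rewrite /h; case: ifP => _; clear -hi hsN; lia.
have hhX : forall i, h i != #|X|.
  move=> i; rewrite /h; case: ifP => h1; apply/eqP => h2; clear -h1 h2; lia.
pose f := fun i : 'I_s => C (h i).
have key : forall i j : 'I_s, (f i \subset f j) = (i <= j).
  move=> i j; apply/idP/idP => H; last by apply: hmono; rewrite hle.
  have := subset_leq_card H; rewrite !hcard.
  rewrite (minn_idPl (hhN i)) (minn_idPl (hhN j)) hle //.
exists f; split; first split => //.
  by move=> i j e; apply/val_inj/eqP; rewrite eqn_leq -!key e !subxx.
by move=> i j; rewrite /f !alpha.
Qed.

Lemma no_small s k : N <= s.-1 -> 'C(s.-1, uphalf s.-1) + 1 < k ->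
  @exact_coloring N k c -> False.
Proof.
move=> hN hk [hrange hsurj]; set a := c set0.
pose g := fun i : 'I_k => odflt set0 [pick A | c A == i.+1].
have hg : forall i : 'I_k, c (g i) = i.+1.
  move=> i; rewrite /g; case: pickP => [A /eqP //|H].
  have [A hA] := hsurj i.+1 ltac:(by rewrite ltn0Sn ltn_ord).
  by have := H A; rewrite hA eqxx.
pose Dm := [set i : 'I_k | i.+1 != a].
pose G := g @: Dm.
have hG : #|G| = #|Dm|.
  apply: card_in_imset => i j _ _ e; apply/val_inj.
  by have := hg i; rewrite e hg => -[h]; exact: esym h.
have hDm : k.-1 <= #|Dm|.
  have hC : #|~: Dm| <= 1.
    case: (set_0Vmem (~: Dm)) => [->|[i0 hi0]]; first by rewrite cards0.
    rewrite -(cards1 i0); apply: subset_leq_card; apply/subsetP => i.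
    move: hi0; rewrite !inE !negbK => /eqP h1 /eqP h2.
    by apply/eqP/val_inj; move: h1; rewrite -h2 => -[].
  have := cardsC Dm; rewrite card_ord; clear -hC; lia.
have anti : forall A B, A \in G -> B \in G -> A \subset B -> A = B.
  move=> A B /imsetP [i hi ->] /imsetP [j hj ->] hs.
  apply/eqP/negPn/negP => hne.
  have p : g i \proper g j by rewrite properEneq hne hs.
  rewrite inE in hi; rewrite inE in hj.
  have e := F1 p ltac:(by rewrite hg) ltac:(by rewrite hg).
  rewrite !hg in e; case: e => e; move/negP: hne; apply; apply/eqP; congr g; exact: val_inj.
have := sperner anti; rewrite card_ord hG => hS.
have hb : 'C(N, N./2) <= 'C(s.-1, uphalf s.-1).
  apply: leq_trans (leq_bin2l _ hN) _.
  have hu := uphalf_half s.-1; have hd := odd_double_half s.-1.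
  rewrite -mul2n in hd.
  have -> : 'C(s.-1, uphalf s.-1) = 'C(s.-1, s.-1./2).
    rewrite -bin_sub; last by clear -hu hd; lia.
    have -> : s.-1 - uphalf s.-1 = s.-1./2 by clear -hu hd; lia.
    by [].
  exact: bin_max.
clear -hb hS hDm hk; lia.
Qed.

End Main.

Lemma counter (N k : nat) : 2 <= N -> 3 <= k -> k <= 'C(N, uphalf N) + 1 ->
  ~ GR_prop k 3 N.+1 N.
Proof.
move=> hN hk hkC H.
have hu := uphalf_half N; have hd := odd_double_half N; rewrite -mul2n in hd.
set m := uphalf N in hkC hu.
have hm1 : 1 <= m by clear -hu hd hN; lia.
have hmN : m <= N by clear -hu hd hN; lia.
pose L := [set A : {set 'I_N} | #|A| == m].
pose e := enum L.
pose col := fun A : {set 'I_N} => if #|A| == m then (minn (index A e) (k - 2)).+2 else 1.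
have hsize : size e = 'C(N, m) by rewrite /e -cardE /L card_draws card_ord.
have hex : @exact_coloring N k col.
  split.
  - move=> A; rewrite /col; case: ifP => _; last by clear -hk; lia.
    have := geq_minr (index A e) (k - 2); clear -hk; lia.
  - move=> i /andP[hi1 hik]; have [->|hi] := eqVneq i 1.
      exists set0; rewrite /col cards0; case: ifP => // /eqP h0.
      by rewrite -h0 in hm1.
    have hi2 : i - 2 < size e by rewrite hsize; clear -hi1 hik hi hkC; lia.
    exists (nth set0 e (i - 2)).
    have : nth set0 e (i - 2) \in e := mem_nth set0 hi2.
    rewrite mem_enum inE => /eqP hc.
    rewrite /col hc eqxx index_uniq ?enum_uniq //.
    rewrite (minn_idPl _); last by clear -hik; lia.
    clear -hi1 hi; lia.
have one : forall A B : {set 'I_N}, A \proper B -> col A = 1 \/ col B = 1.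
  move=> A B /proper_card; rewrite /col; case: ifP => /eqP h1; case: ifP => /eqP h2;
  auto; by rewrite h1 h2 ltnn.
case: (H col hex) => [[f [[finj fkey] fcol]] | [f [[finj fkey] fcol]]].
  have pr : forall i j : 'I_3, i < j -> f i \proper f j.
    move=> i j hij; rewrite properEneq fkey (ltnW hij) andbT.
    by apply/negP => /eqP /finj hh; rewrite hh ltnn in hij.
  pose o0 := @Ordinal 3 0 isT; pose o1 := @Ordinal 3 1 isT; pose o2 := @Ordinal 3 2 isT.
  have d01 : col (f o0) <> col (f o1) by move/fcol/(congr1 val).
  have d12 : col (f o1) <> col (f o2) by move/fcol/(congr1 val).
  have d02 : col (f o0) <> col (f o2) by move/fcol/(congr1 val).
  have u01 := one _ _ (pr o0 o1 isT).
  have u12 := one _ _ (pr o1 o2 isT).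
  have u02 := one _ _ (pr o0 o2 isT).
  clear -d01 d12 d02 u01 u12 u02; lia.
pose g := fun n : nat => f (inord n).
have step : forall j, j < N -> #|g j| < #|g j.+1|.
  move=> j hj; apply: proper_card; rewrite properEneq /g fkey !inordK //; last by apply: ltnW.
  rewrite leqnSn andbT; apply/negP => /eqP /finj /(congr1 (@nat_of_ord N.+1)).
  rewrite !inordK //; last by apply: ltnW.
  move=> hh; clear -hh; lia.
have grow : forall d i, i + d <= N -> #|g i| + d <= #|g (i + d)|.
  elim=> [|d IH] i hid; first by rewrite !addn0.
  have hid' : i + d <= N by apply: leq_trans hid; rewrite addnS.
  have h1 := IH i hid'.
  have h2 := step (i + d) ltac:(by rewrite -addnS).
  rewrite !addnS; clear -h1 h2; lia.
have gN : forall n, #|g n| <= N by move=> n; rewrite -[X in _ <= X]card_ord max_card.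
have a1 := grow m 0 ltac:(by rewrite add0n).
have a2 := grow (N - m) m ltac:(by rewrite subnKC).
rewrite add0n in a1; rewrite subnKC // in a2.
have gm : #|g m| = m by have := gN N; clear -a1 a2 hmN; lia.
have g0 : #|g 0| = 0 by clear -a1 gm; lia.
have := fcol (inord m) (inord 0); rewrite -/(g m) -/(g 0) /col gm g0 eqxx.
case: ifP => [/eqP h0|_] //; by rewrite -h0 in hm1.
Qed.

Theorem theorem1p2 (k s : nat) (hk : 3 <= k) (hs : 3 <= s) :
  (k <= 'C(s.-1, uphalf s.-1) + 1 -> GR_is k 3 s s) /\
  ('C(s.-1, uphalf s.-1) + 1 < k -> GR_good k 3 s).
Proof.
split.
  case: s hs => [|s'] //= hs hkC.
  have hs' : 2 <= s' by [].
  split; [|split].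
  - move=> Hg; apply: (counter hs' hk hkC); apply: Hg; clear -hs'; lia.
  - move=> N hN col hex.
    case: (classic (@has_rainbow_chain N 3 col)) => [h|h]; [by left|right].
    exact: (mono_exists h hN hk hex).
  - move=> m Hm; rewrite leqNgt; apply/negP => hlt.
    apply: (counter hs' hk hkC); apply: Hm; clear -hlt; lia.
move=> hkC N hN col hex.
case: (classic (@has_rainbow_chain N 3 col)) => [h|h]; [by left|right].
have [hsN|hsN] := leqP s N; first exact: (mono_exists h hsN hk hex).
exfalso; apply: (no_small h _ hkC hex); clear -hsN; lia.
Qed.
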